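(* Let $M$ be a left-quotient of $\widetilde{\mathrm{SL}}_2$ with fundamental group $\pi$ presented as below, and let $\rho,\rho'\in\mathcal R(\pi,\widetilde{\mathrm{SL}}_2)$ satisfy $\mathrm{pr}\circ\rho=\mathrm{pr}\circ\rho'$. Then $\rho(h)=\rho'(h)$ and $\rho(q_j)=\rho'(q_j)$ for $j=1,\dots,n$.
   Context: $\mathrm{pr}\colon\widetilde{\mathrm{SL}}_2\to\mathrm{PSL}_2\mathbb R$ is the universal covering. $M$ has normalised Seifert invariants $\{g,b,(\alpha_1,\beta_1),\dots,(\alpha_n,\beta_n)\}$ with Euler number $e=-(b+\sum_j\beta_j/\alpha_j)\neq0$, and $\pi=\langle u_1,v_1,\dots,u_g,v_g,q_1,\dots,q_n,h\mid\prod_i[u_i,v_i]\prod_jq_j=h^b,\ q_j^{\alpha_j}h^{\beta_j}=1,\ h\text{ central}\rangle$. $\mathcal R(\pi,\widetilde{\mathrm{SL}}_2)$ is the set of faithful homomorphisms $\pi\to\widetilde{\mathrm{SL}}_2$ with discrete cocompact image. *)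

(* Defs.v *)
From Stdlib Require Import Reals ZArith List.
Open Scope R_scope.

Record Group := {
  carrier :> Type;
  gmul : carrier -> carrier -> carrier;
  gone : carrier;
  ginv : carrier -> carrier;
  gmulA : forall x y z, gmul x (gmul y z) = gmul (gmul x y) z;
  gmul1l : forall x, gmul gone x = x;
  gmulVl : forall x, gmul (ginv x) x = gone
}.

Arguments gmul {_} _ _.
Arguments gone {_}.
Arguments ginv {_} _.

Fixpoint gpow_nat {G : Group} (x : G) (k : nat) : G :=
  match k with O => gone | S k' => gmul x (gpow_nat x k') end.

Definition gpow {G : Group} (x : G) (z : Z) : G :=
  match z with
  | Z0 => gone
  | Zpos p => gpow_nat x (Pos.to_nat p)
  | Zneg p => ginv (gpow_nat x (Pos.to_nat p))
  end.

Definition gcomm {G : Group} (u v : G) : G :=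
  gmul (gmul (gmul u v) (ginv u)) (ginv v).

Fixpoint gprod {G : Group} (k : nat) (x : nat -> G) : G :=
  match k with O => gone | S k' => gmul (gprod k' x) (x k') end.

Definition is_group_hom {G H : Group} (phi : G -> H) : Prop :=
  forall x y, phi (gmul x y) = gmul (phi x) (phi y).

(** The relations of the presentation of pi, evaluated on elements
    u_i, v_i (i < g), q_j (j < n), h of a group G.  (Indices 0-based.) *)
Definition seifert_relations (g n : nat) (b : Z) (alpha beta : nat -> Z)
    {G : Group} (u v q : nat -> G) (h : G) : Prop :=
  gmul (gprod g (fun i => gcomm (u i) (v i))) (gprod n q) = gpow h b /\
  (forall j, (j < n)%nat -> gmul (gpow (q j) (alpha j)) (gpow h (beta j)) = gone) /\
  (forall x : G, gmul h x = gmul x h).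

(** [P] with elements u,v,q,h is presented by the Seifert presentation:
    the relations hold, and for every group H and elements satisfying the
    relations there is a unique homomorphism P -> H mapping generators to them. *)
Definition seifert_presentation (g n : nat) (b : Z) (alpha beta : nat -> Z)
    (P : Group) (u v q : nat -> P) (h : P) : Prop :=
  seifert_relations g n b alpha beta u v q h /\
  forall (H : Group) (u' v' q' : nat -> H) (h' : H),
    seifert_relations g n b alpha beta u' v' q' h' ->
    (exists phi : P -> H, is_group_hom phi /\
       (forall i, (i < g)%nat -> phi (u i) = u' i /\ phi (v i) = v' i) /\
       (forall j, (j < n)%nat -> phi (q j) = q' j) /\ phi h = h') /\
    (forall phi1 phi2 : P -> H, is_group_hom phi1 -> is_group_hom phi2 ->
       (forall i, (i < g)%nat -> phi1 (u i) = phi2 (u i) /\ phi1 (v i) = phi2 (v i)) ->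
       (forall j, (j < n)%nat -> phi1 (q j) = phi2 (q j)) -> phi1 h = phi2 h ->
       forall x, phi1 x = phi2 x).

Definition normalised_seifert (n : nat) (alpha beta : nat -> Z) : Prop :=
  forall j, (j < n)%nat ->
    (0 < beta j < alpha j)%Z /\ Z.gcd (alpha j) (beta j) = 1%Z.

Fixpoint sum_upto (k : nat) (f : nat -> R) : R :=
  match k with O => 0 | S k' => sum_upto k' f + f k' end.

Definition euler_number (n : nat) (b : Z) (alpha beta : nat -> Z) : R :=
  - (IZR b + sum_upto n (fun j => IZR (beta j) / IZR (alpha j))).

(** * The universal cover of PSL_2(R)
    An element of SL_2(R) is a matrix (a b; c d) with ad - bc = 1; it acts
    on the circle of rays in R^2.  The universal cover of SL_2(R) (= that of
    PSL_2(R)) is realised as the group, under composition, of continuous maps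
    f : R -> R lifting the action of some g in SL_2(R) on rays, where the ray
    of angle t is spanned by (cos t, sin t). *)
Record SL2 := mkSL2 { sa : R; sb : R; sc : R; sd : R }.

Definition is_SL2 (m : SL2) : Prop := sa m * sd m - sb m * sc m = 1.

Definition SL2_opp (m : SL2) : SL2 := mkSL2 (- sa m) (- sb m) (- sc m) (- sd m).

Definition lifts (m : SL2) (f : R -> R) : Prop :=
  is_SL2 m /\ continuity f /\
  forall t, exists r, 0 < r /\
    sa m * cos t + sb m * sin t = r * cos (f t) /\
    sc m * cos t + sd m * sin t = r * sin (f t).

Definition in_SL2t (f : R -> R) : Prop := exists m, lifts m f.

(** pr o f = pr o f' in PSL_2(R) = SL_2(R)/{±1} *)
Definition pr_eq (f f' : R -> R) : Prop :=
  exists m, lifts m f /\ (lifts m f' \/ lifts (SL2_opp m) f').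

(** Topology on \widetilde{SL}_2: that induced by the embedding
    f |-> (m, f 0) into SL_2(R) x R (a homeomorphism onto a closed subset). *)
Definition SL2t_close (f f' : R -> R) (eps : R) : Prop :=
  exists m m', lifts m f /\ lifts m' f' /\
    Rabs (sa m - sa m') < eps /\ Rabs (sb m - sb m') < eps /\
    Rabs (sc m - sc m') < eps /\ Rabs (sd m - sd m') < eps /\
    Rabs (f 0 - f' 0) < eps.

Definition SL2t_bounded (f : R -> R) (C : R) : Prop :=
  exists m, lifts m f /\
    Rabs (sa m) <= C /\ Rabs (sb m) <= C /\ Rabs (sc m) <= C /\ Rabs (sd m) <= C /\
    Rabs (f 0) <= C.

Definition is_hom_SL2t {P : Group} (rho : P -> R -> R) : Prop :=
  (forall x, in_SL2t (rho x)) /\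
  (forall x y t, rho (gmul x y) t = rho x (rho y t)).

Definition faithful_SL2t {P : Group} (rho : P -> R -> R) : Prop :=
  forall x y, (forall t, rho x t = rho y t) -> x = y.

Definition discrete_image {P : Group} (rho : P -> R -> R) : Prop :=
  forall x, exists eps, 0 < eps /\
    forall y, SL2t_close (rho x) (rho y) eps -> forall t, rho y t = rho x t.

(** the image Gamma is cocompact: G = Gamma K for a compact K, i.e. (the image
    of the embedding being closed) for a bounded K *)
Definition cocompact_image {P : Group} (rho : P -> R -> R) : Prop :=
  exists C, forall f, in_SL2t f ->
    exists x k, in_SL2t k /\ SL2t_bounded k C /\ forall t, f t = rho x (k t).

Definition in_Rep {P : Group} (rho : P -> R -> R) : Prop :=
  is_hom_SL2t rho /\ faithful_SL2t rho /\ discrete_image rho /\ cocompact_image rho.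

(* Main.v *)
Require Import Defs.
From Stdlib Require Import Reals ZArith List Lra Lia Psatz.
Open Scope R_scope.

Lemma cont_sub (f g : R -> R) : continuity f -> continuity g -> continuity (fun x => f x - g x).
Proof. intros; exact (continuity_minus f g H H0). Qed.
Lemma cont_opp (f : R -> R) : continuity f -> continuity (fun x => - f x).
Proof. intros; exact (continuity_opp f H). Qed.
Lemma cont_cst (c : R) : continuity (fun _ => c).
Proof. apply continuity_const; intros x y; reflexivity. Qed.

Lemma sin_pos_lift m f t s : lifts m f -> t < s < t + PI -> 0 < sin (f s - f t).
Proof.
  intros [Hdet [Hc Hl]] Hts.
  destruct (Hl t) as [rt [Hrt [H1 H2]]]; destruct (Hl s) as [rs [Hrs [H3 H4]]].
  assert (Hsin: 0 < sin (s - t)) by (apply sin_gt_0; lra).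
  assert (E: rt * rs * sin (f s - f t) = sin (s - t)).
  { rewrite !sin_minus. unfold is_SL2 in Hdet.
    transitivity ((sc m * cos s + sd m * sin s)*(sa m*cos t + sb m*sin t)
       - (sa m*cos s+sb m*sin s)*(sc m*cos t+sd m*sin t)).
    - rewrite H1, H2, H3, H4; ring.
    - transitivity ((sa m*sd m - sb m*sc m)*(sin s*cos t - cos s*sin t)); [ring| rewrite Hdet; ring]. }
  assert (0 < rt*rs) by nra. nra.
Qed.

Lemma sin_diff0 r r' e x y : 0 < r -> (e = 1 \/ e = -1) ->
  r*cos x = e*(r'*cos y) -> r*sin x = e*(r'*sin y) -> sin (x - y) = 0.
Proof.
  intros Hr He H1 H2. rewrite sin_minus.
  assert (r*(sin x*cos y - cos x*sin y) = 0).
  { replace (r*(sin x*cos y - cos x*sin y)) with ((r*sin x)*cos y - (r*cos x)*sin y) by ring.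
    rewrite H1, H2; ring. }
  apply Rmult_integral in H; destruct H; lra.
Qed.

Lemma lift_shift_pi m f : lifts m f -> forall t, f (t + PI) = f t + PI.
Proof.
  intros HL t. pose proof HL as [Hdet [Hc Hl]].
  assert (S0: sin (f (t+PI) - f t) = 0).
  { destruct (Hl t) as [r [Hr [H1 H2]]]; destruct (Hl (t+PI)) as [r' [Hr' [H3 H4]]].
    rewrite neg_cos, neg_sin in H3, H4.
    apply (sin_diff0 r' r (-1)); [lra|right; reflexivity|lra|lra]. }
  destruct (sin_eq_0_0 _ S0) as [k Hk].
  assert (PIp := PI_RGT_0).
  destruct (Z.lt_trichotomy k 1) as [Hlt|[Heq|Hgt]].
  - destruct (Z.eq_dec k 0) as [->|Hne].
    + exfalso. simpl in Hk.
      assert (A := sin_pos_lift m f t (t + PI/2) HL ltac:(lra)).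
      assert (B := sin_pos_lift m f (t + PI/2) (t + PI) HL ltac:(lra)).
      replace (f (t+PI) - f (t+PI/2)) with (- (f (t+PI/2) - f t)) in B by lra.
      rewrite sin_neg in B. lra.
    + exfalso. assert (Hk1: (k <= -1)%Z) by lia. apply IZR_le in Hk1.
      destruct (IVT (fun x => -(f x - f t) - PI/2) t (t+PI)) as [z [Hz Hfz]].
      * apply cont_sub; [apply cont_opp, cont_sub; [exact Hc| apply cont_cst]| apply cont_cst].
      * lra.
      * lra.
      * rewrite Hk. nra.
      * assert (Ez: f z - f t = - (PI/2)) by lra.
        assert (z <> t) by (intro; subst; lra).
        assert (z <> t + PI).
        { intro; subst. rewrite Hk in Ez.
          assert (IZR (2*k) = -1) by (rewrite mult_IZR; simpl; nra).
          apply eq_IZR in H0. lia. }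
        assert (A := sin_pos_lift m f t z HL ltac:(lra)).
        rewrite Ez, sin_neg, sin_PI2 in A. lra.
  - subst. simpl in Hk. lra.
  - exfalso. assert (Hk1: (2 <= k)%Z) by lia. apply IZR_le in Hk1.
    destruct (IVT (fun x => (f x - f t) - 3*PI/2) t (t+PI)) as [z [Hz Hfz]].
    * apply cont_sub; [apply cont_sub; [exact Hc| apply cont_cst]| apply cont_cst].
    * lra.
    * lra.
    * rewrite Hk. nra.
    * assert (Ez: f z - f t = PI/2 + PI) by lra.
      assert (z <> t) by (intro; subst; lra).
      assert (z <> t + PI).
      { intro; subst. rewrite Hk in Ez.
        assert (IZR (2*k) = 3) by (rewrite mult_IZR; simpl; nra).
        apply eq_IZR in H0. lia. }
      assert (A := sin_pos_lift m f t z HL ltac:(lra)).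
      rewrite Ez, neg_sin, sin_PI2 in A. lra.
Qed.

Lemma lift_shift_nat m f : lifts m f -> forall n t, f (t + INR n * PI) = f t + INR n * PI.
Proof.
  intros HL n; induction n; intro t.
  - simpl. rewrite !Rmult_0_l, !Rplus_0_r. reflexivity.
  - rewrite S_INR. replace (t + (INR n + 1) * PI) with ((t + INR n * PI) + PI) by ring.
    rewrite (lift_shift_pi m f HL), IHn. ring.
Qed.

Lemma lift_shift_k m f : lifts m f -> forall k t, f (t + IZR k * PI) = f t + IZR k * PI.
Proof.
  intros HL k t. destruct k.
  - simpl. rewrite !Rmult_0_l, !Rplus_0_r. reflexivity.
  - rewrite <- positive_nat_Z, <- INR_IZR_INZ. apply (lift_shift_nat m f HL).
  - change (IZR (Z.neg p)) with (- IZR (Z.pos p)).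
    rewrite <- positive_nat_Z, <- INR_IZR_INZ.
    pose proof (lift_shift_nat m f HL (Pos.to_nat p) (t + - INR (Pos.to_nat p) * PI)) as H.
    replace (t + - INR (Pos.to_nat p) * PI + INR (Pos.to_nat p) * PI) with t in H by ring.
    rewrite H. ring.
Qed.
Lemma piZ_helper1 (d : R -> R) x y a b : continuity d -> x < y -> d x = IZR a * PI -> d y = IZR b * PI ->
  (a < b)%Z -> (forall t, exists k, d t = IZR k * PI) -> False.
Proof.
  intros Hc Hxy Ha Hb Hab Hpi. assert (PIp := PI_RGT_0).
  assert (Hab1: (a + 1 <= b)%Z) by lia. apply IZR_le in Hab1. rewrite plus_IZR in Hab1.
  destruct (IVT (fun s => d s - (IZR a + /2) * PI) x y) as [z [Hz Hfz]].
  - apply cont_sub; [exact Hc| apply cont_cst].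
  - exact Hxy.
  - rewrite Ha. lra.
  - rewrite Hb. nra.
  - destruct (Hpi z) as [k Hk].
    assert (IZR k = IZR a + /2).
    { apply (Rmult_eq_reg_r PI); [| apply PI_neq0]. lra. }
    assert (IZR (2*k - 2*a) = 1) by (rewrite minus_IZR, !mult_IZR; simpl; lra).
    apply eq_IZR in H0. lia.
Qed.

Lemma piZ_helper2 (d : R -> R) x y a b : continuity d -> x <> y -> d x = IZR a * PI -> d y = IZR b * PI ->
  a <> b -> (forall t, exists k, d t = IZR k * PI) -> False.
Proof.
  intros Hc Hxy Ha Hb Hab Hpi.
  assert (Hpi' : forall t, exists k, - d t = IZR k * PI).
  { intro t; destruct (Hpi t) as [k Hk]; exists (-k)%Z; rewrite opp_IZR, Hk; ring. }
  assert (Hc' := cont_opp d Hc).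
  assert (Ha' : - d x = IZR (-a) * PI) by (rewrite opp_IZR, Ha; ring).
  assert (Hb' : - d y = IZR (-b) * PI) by (rewrite opp_IZR, Hb; ring).
  destruct (Rdichotomy _ _ Hxy) as [H|H]; destruct (Z.lt_gt_cases a b) as [[Hl|Hl] _];
    try exact Hab.
  - exact (piZ_helper1 d x y a b Hc H Ha Hb Hl Hpi).
  - exact (piZ_helper1 _ x y (-a) (-b) Hc' H Ha' Hb' ltac:(lia) Hpi').
  - exact (piZ_helper1 _ y x (-b) (-a) Hc' H Hb' Ha' ltac:(lia) Hpi').
  - exact (piZ_helper1 d y x b a Hc H Hb Ha Hl Hpi).
Qed.

Lemma diff_lift m f f' : lifts m f -> (lifts m f' \/ lifts (SL2_opp m) f') ->
  exists k, forall t, f' t = f t + IZR k * PI.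
Proof.
  intros HL HL'.
  assert (Hc : continuity f) by (destruct HL as [_ [H _]]; exact H).
  assert (Hc' : continuity f') by (destruct HL' as [[_ [H _]]|[_ [H _]]]; exact H).
  assert (Hpi : forall t, exists k, f' t - f t = IZR k * PI).
  { intro t. apply sin_eq_0_0.
    destruct HL as [_ [_ Hl]]. destruct (Hl t) as [r [Hr [H1 H2]]].
    destruct HL' as [[_ [_ Hl']]|[_ [_ Hl']]]; destruct (Hl' t) as [r' [Hr' [H3 H4]]];
      simpl in H3, H4.
    - apply (sin_diff0 r' r 1); [lra|left; reflexivity|lra|lra].
    - apply (sin_diff0 r' r (-1)); [lra|right; reflexivity|lra|lra]. }
  destruct (Hpi 0) as [k0 Hk0]. exists k0. intro t.
  destruct (Hpi t) as [k1 Hk1].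
  destruct (Z.eq_dec k0 k1) as [<-|Hne]; [lra|].
  destruct (Req_dec t 0) as [->|Ht]; [lra|].
  exfalso. exact (piZ_helper2 (fun s => f' s - f s) t 0 k1 k0 (cont_sub _ _ Hc' Hc) Ht Hk1 Hk0
     (fun e => Hne (eq_sym e)) Hpi).
Qed.

Fixpoint zsum (k : nat) (f : nat -> Z) : Z :=
  match k with O => 0%Z | S k' => (zsum k' f + f k')%Z end.

Section Alg.
Variable P : Group.
Variable c : P -> Z.
Hypothesis cadd : forall x y, c (gmul x y) = (c x + c y)%Z.

Lemma c1 : c gone = 0%Z.
Proof. pose proof (cadd gone gone). rewrite gmul1l in H. lia. Qed.
Lemma cinv x : c (ginv x) = (- c x)%Z.
Proof. pose proof (cadd (ginv x) x). rewrite gmulVl, c1 in H. lia. Qed.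
Lemma cpow_nat x k : c (gpow_nat x k) = (Z.of_nat k * c x)%Z.
Proof. induction k; simpl gpow_nat. - rewrite c1; reflexivity. - rewrite cadd, IHk. lia. Qed.
Lemma cpow x z : c (gpow x z) = (z * c x)%Z.
Proof.
  destruct z; unfold gpow.
  - apply c1.
  - rewrite cpow_nat, positive_nat_Z. reflexivity.
  - rewrite cinv, cpow_nat, positive_nat_Z. lia.
Qed.
Lemma cprod k x : c (gprod k x) = zsum k (fun i => c (x i)).
Proof. induction k; simpl. - apply c1. - rewrite cadd, IHk. reflexivity. Qed.
Lemma ccommprod k (u v : nat -> P) : c (gprod k (fun i => gcomm (u i) (v i))) = 0%Z.
Proof. induction k; simpl. - apply c1. - rewrite cadd, IHk. unfold gcomm. rewrite !cadd, !cinv. lia. Qed.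
End Alg.

Lemma alg_final n b (alpha beta : nat -> Z) (K : Z) (Q : nat -> Z) :
  normalised_seifert n alpha beta -> euler_number n b alpha beta <> 0 ->
  zsum n Q = (b * K)%Z -> (forall j, (j < n)%nat -> (alpha j * Q j + beta j * K = 0)%Z) ->
  K = 0%Z.
Proof.
  intros Hn He Hs Hr.
  assert (Cl : forall k, (k <= n)%nat -> IZR (zsum k Q) =
     - IZR K * sum_upto k (fun j => IZR (beta j) / IZR (alpha j))).
  { induction k; intro Hk; simpl. - ring.
    - rewrite plus_IZR, IHk by lia.
      assert (Hj : (k < n)%nat) by lia.
      destruct (Hn k Hj) as [[Hb Ha] _].
      assert (Ha' : IZR (alpha k) <> 0) by (apply not_0_IZR; lia).
      pose proof (Hr k Hj) as E. apply (f_equal IZR) in E.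
      rewrite plus_IZR, !mult_IZR in E.
      assert (IZR (Q k) = - IZR K * (IZR (beta k) / IZR (alpha k))).
      { apply (Rmult_eq_reg_l (IZR (alpha k))); [|exact Ha'].
        replace (IZR (alpha k) * (- IZR K * (IZR (beta k) / IZR (alpha k))))
          with (- IZR K * IZR (beta k)) by (field; exact Ha'). lra. }
      rewrite H. ring. }
  specialize (Cl n (Nat.le_refl n)). rewrite Hs, mult_IZR in Cl.
  unfold euler_number in He.
  assert (IZR K * (IZR b + sum_upto n (fun j => IZR (beta j) / IZR (alpha j))) = 0) by lra.
  apply Rmult_integral in H. destruct H as [H|H]; [apply eq_IZR; exact H| lra].
Qed.

From Stdlib Require Import ClassicalEpsilon.

Theorem lemma4 (g n : nat) (b : Z) (alpha beta : nat -> Z)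
  (P : Group) (u v q : nat -> P) (h : P)
  (Hnorm : normalised_seifert n alpha beta)
  (He : euler_number n b alpha beta <> 0)
  (Hpres : seifert_presentation g n b alpha beta P u v q h)
  (rho rho' : P -> R -> R)
  (Hrho : in_Rep rho) (Hrho' : in_Rep rho')
  (Hpr : forall x, pr_eq (rho x) (rho' x)) :
  (forall t, rho h t = rho' h t) /\
  (forall j, (j < n)%nat -> forall t, rho (q j) t = rho' (q j) t).
Proof.
  destruct Hrho as [[Hin Hmul] _]. destruct Hrho' as [[Hin' Hmul'] _].
  assert (Hk : forall x, exists k, forall t, rho' x t = rho x t + IZR k * PI).
  { intro x. destruct (Hpr x) as [m [H1 H2]]. exact (diff_lift m _ _ H1 H2). }
  pose (c := fun x => proj1_sig (constructive_indefinite_description _ (Hk x))).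
  assert (Hc : forall x t, rho' x t = rho x t + IZR (c x) * PI).
  { intros x. unfold c. exact (proj2_sig (constructive_indefinite_description _ (Hk x))). }
  assert (cadd : forall x y, c (gmul x y) = (c x + c y)%Z).
  { intros x y. destruct (Hin x) as [m Hm].
    pose proof (Hc (gmul x y) 0) as E.
    rewrite Hmul', Hmul, (Hc y), (Hc x), (lift_shift_k m _ Hm) in E.
    apply eq_IZR. rewrite plus_IZR.
    apply (Rmult_eq_reg_r PI); [| apply PI_neq0]. lra. }
  destruct Hpres as [[Hr1 [Hr2 Hr3]] _].
  assert (E1 := f_equal c Hr1).
  rewrite cadd, ccommprod, cprod, cpow in E1 by exact cadd.
  assert (E2 : forall j, (j < n)%nat -> (alpha j * c (q j) + beta j * c h = 0)%Z).
  { intros j Hj. pose proof (f_equal c (Hr2 j Hj)) as E.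
    rewrite cadd, !cpow, c1 in E by exact cadd. lia. }
  assert (K0 : c h = 0%Z).
  { apply (alg_final n b alpha beta (c h) (fun j => c (q j))); auto.
    }
  split.
  - intro t. rewrite Hc, K0. simpl. ring.
  - intros j Hj t. rewrite Hc.
    assert (c (q j) = 0%Z).
    { pose proof (E2 j Hj). rewrite K0, Z.mul_0_r, Z.add_0_r in H. destruct (Hnorm j Hj) as [[Hb0 Ha] _]. apply Z.mul_eq_0 in H. destruct H; [lia|assumption]. }
    rewrite H. simpl. ring.
Qed.
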